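(* Let $x$ be a speedable number which is nearly computable. Then $x$ is regainingly approximable.
   Context: A left-computable real $x$ (i.e. limit of a computable non-decreasing sequence of rationals) is speedable if there exist $\rho\in(0,1)$ and a computable strictly increasing sequence of rationals $(x_n)_n$ converging to $x$ such that $\frac{x-x_{n+1}}{x-x_n}\le\rho$ for infinitely many $n\in\mathbb{N}$. A real $x$ is regainingly approximable if there is a computable non-decreasing sequence of rationals $(x_n)_n$ converging to $x$ with $x - x_n < 2^{-n}$ for infinitely many $n\in\mathbb{N}$. A function $f:\mathbb{N}\to\mathbb{N}$ is a modulus of convergence of a convergent sequence $(y_n)_n$ with limit $y$ if for all $n$ and all $m\ge f(n)$ we have $|y-y_m|<2^{-n}$; $(y_n)_n$ converges computably if it has a computable modulus of convergence. A sequence $(x_n)_n$ converges nearly computably if it converges and for every computable increasing function $s:\mathbb{N}\to\mathbb{N}$ the sequence $(x_{s(n+1)}-x_{s(n)})_n$ converges computably to $0$. A real is nearly computable if some computable sequence of rationals converges nearly computably to it. *)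

(* Defs.v *)
From Stdlib Require Import Reals List Arith.
Import ListNotations.
Open Scope R_scope.

Inductive code : Type :=
| CZero : code
| CSucc : code
| CProj : nat -> code                (* i-th argument (0 if absent) *)
| CComp : code -> list code -> code
| CPrimRec : code -> code -> code    (* primitive recursion on first argument *)
| CMu : code -> code.                (* least n with f (n :: v) = 0 *)

Inductive eval : code -> list nat -> nat -> Prop :=
| eval_zero : forall v, eval CZero v 0
| eval_succ : forall x v, eval CSucc (x :: v) (S x)
| eval_proj : forall i v, eval (CProj i) v (nth i v 0%nat)
| eval_comp : forall f gs v ws y,
    evals gs v ws -> eval f ws y -> eval (CComp f gs) v y
| eval_prec0 : forall f g v y, eval f v y -> eval (CPrimRec f g) (0%nat :: v) y
| eval_precS : forall f g n v z y,
    eval (CPrimRec f g) (n :: v) z -> eval g (n :: z :: v) y ->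
    eval (CPrimRec f g) (S n :: v) y
| eval_mu : forall f v n,
    eval f (n :: v) 0 ->
    (forall m, (m < n)%nat -> exists k, eval f (m :: v) (S k)) ->
    eval (CMu f) v n
with evals : list code -> list nat -> list nat -> Prop :=
| evals_nil : forall v, evals [] v []
| evals_cons : forall g gs v y ys,
    eval g v y -> evals gs v ys -> evals (g :: gs) v (y :: ys).

Definition computable_fun (f : nat -> nat) : Prop :=
  exists c : code, forall n, eval c [n] (f n).

Definition computable_rat_seq (q : nat -> R) : Prop :=
  exists a b c : nat -> nat,
    computable_fun a /\ computable_fun b /\ computable_fun c /\
    forall n, q n = (INR (a n) - INR (b n)) / INR (S (c n)).

Definition nondecreasing_seq (q : nat -> R) : Prop := forall n, q n <= q (S n).
Definition increasing_seq (q : nat -> R) : Prop := forall n, q n < q (S n).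
Definition increasing_nat_fun (s : nat -> nat) : Prop := forall n, (s n < s (S n))%nat.

Definition left_computable (x : R) : Prop :=
  exists q, computable_rat_seq q /\ nondecreasing_seq q /\ Un_cv q x.

Definition speedable (x : R) : Prop :=
  left_computable x /\
  exists rho : R, 0 < rho < 1 /\
  exists q, computable_rat_seq q /\ increasing_seq q /\ Un_cv q x /\
    forall N, exists n, (N <= n)%nat /\ (x - q (S n)) / (x - q n) <= rho.

Definition regainingly_approximable (x : R) : Prop :=
  exists q, computable_rat_seq q /\ nondecreasing_seq q /\ Un_cv q x /\
    forall N, exists n, (N <= n)%nat /\ x - q n < / 2 ^ n.

Definition is_modulus (y : nat -> R) (l : R) (f : nat -> nat) : Prop :=
  forall n m, (f n <= m)%nat -> Rabs (l - y m) < / 2 ^ n.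

Definition converges_computably_to (y : nat -> R) (l : R) : Prop :=
  Un_cv y l /\ exists f, computable_fun f /\ is_modulus y l f.

Definition converges_nearly_computably_to (q : nat -> R) (x : R) : Prop :=
  Un_cv q x /\
  forall s, computable_fun s -> increasing_nat_fun s ->
    converges_computably_to (fun n => q (s (S n)) - q (s n)) 0.

Definition nearly_computable (x : R) : Prop :=
  exists q, computable_rat_seq q /\ converges_nearly_computably_to q x.

(* Main.v *)
Require Import Defs.
From Stdlib Require Import Reals.
From Stdlib Require Import Lra Lia Classical ClassicalEpsilon FunctionalExtensionality List Arith.
Import ListNotations.
Open Scope nat_scope.

Definition computes (c : code) (F : list nat -> nat) := forall v, eval c v (F v).

Lemma computes_ext c F G : computes c F -> (forall v, F v = G v) -> computes c G.
Proof. intros H E v. rewrite <- E. apply H. Qed.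

Lemma c_proj i : computes (CProj i) (fun v => nth i v 0).
Proof. intro v. constructor. Qed.

Lemma c_zero : computes CZero (fun _ => 0).
Proof. intro v. constructor. Qed.

Lemma c_comp1 f F g G : computes f F -> computes g G -> computes (CComp f [g]) (fun v => F [G v]).
Proof. intros Hf Hg v. econstructor. constructor. apply Hg. constructor. apply Hf. Qed.

Lemma c_comp2 f F g G g' G' : computes f F -> computes g G -> computes g' G' ->
  computes (CComp f [g; g']) (fun v => F [G v; G' v]).
Proof. intros Hf Hg Hg' v. econstructor. constructor. apply Hg. constructor. apply Hg'. constructor. apply Hf. Qed.

Definition csucc := CComp CSucc [CProj 0].
Lemma c_succ : computes csucc (fun v => S (nth 0 v 0)).
Proof. intro v. econstructor. constructor. apply c_proj. constructor. constructor. Qed.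

Fixpoint primrec (F G : list nat -> nat) (n : nat) (w : list nat) : nat :=
  match n with 0 => F w | S n' => G (n' :: primrec F G n' w :: w) end.

Lemma c_prec f F g G : computes f F -> computes g G -> forall n w,
  eval (CPrimRec f g) (n :: w) (primrec F G n w).
Proof.
  intros Hf Hg n w; induction n; simpl.
  - constructor; apply Hf.
  - econstructor; [apply IHn | apply Hg].
Qed.

Lemma c_prec1 f F g G : computes f F -> computes g G ->
  computes (CComp (CPrimRec f g) [CProj 0]) (fun v => primrec F G (nth 0 v 0) []).
Proof. intros Hf Hg v. econstructor. constructor. apply c_proj. constructor. apply c_prec; auto. Qed.

Lemma c_prec2 f F g G : computes f F -> computes g G ->
  computes (CComp (CPrimRec f g) [CProj 0; CProj 1]) (fun v => primrec F G (nth 0 v 0) [nth 1 v 0]).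
Proof. intros Hf Hg v. econstructor. constructor. apply c_proj. constructor. apply c_proj. constructor. apply c_prec; auto. Qed.

Lemma least_ex (g : nat -> nat) : (exists m, g m = 0) ->
  exists n, g n = 0 /\ forall k, k < n -> g k <> 0.
Proof.
  intros [m Hm].
  induction m as [m IH] using (well_founded_induction Wf_nat.lt_wf).
  destruct (classic (exists k, k < m /\ g k = 0)) as [[k [Hk1 Hk2]]|Hno].
  - exact (IH k Hk1 Hk2).
  - exists m. split; auto. intros k Hk E. apply Hno. eauto.
Qed.

Definition least0 (g : nat -> nat) : nat :=
  match excluded_middle_informative (exists n, g n = 0 /\ forall k, k < n -> g k <> 0) with
  | left H => proj1_sig (constructive_indefinite_description _ H)
  | right _ => 0 end.

Lemma least0_spec g : (exists m, g m = 0) ->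
  g (least0 g) = 0 /\ forall k, k < least0 g -> g k <> 0.
Proof.
  intros E. unfold least0. destruct excluded_middle_informative as [H|H].
  - destruct constructive_indefinite_description as [n Hn]. exact Hn.
  - exfalso; apply H, least_ex, E.
Qed.

Lemma c_mu c F : computes c F -> (forall v, exists m, F (m :: v) = 0) ->
  computes (CMu c) (fun v => least0 (fun m => F (m :: v))).
Proof.
  intros Hc Hex v. destruct (least0_spec (fun m => F (m :: v)) (Hex v)) as [H0 H1].
  constructor.
  - pose proof (Hc (least0 (fun m => F (m :: v)) :: v)) as E. simpl in H0. rewrite H0 in E. exact E.
  - intros m Hm. specialize (H1 m Hm). simpl in H1.
    destruct (F (m :: v)) as [|k] eqn:E; [congruence|]. exists k. rewrite <- E. apply Hc.
Qed.

Definition cadd := CComp (CPrimRec (CProj 0) (CComp csucc [CProj 1])) [CProj 0; CProj 1].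
Lemma c_add : computes cadd (fun v => nth 0 v 0 + nth 1 v 0).
Proof.
  eapply computes_ext. apply c_prec2. apply c_proj. apply c_comp1. apply c_succ. apply c_proj.
  intro v. simpl. generalize (nth 0 v 0) (nth 1 v 0). intros n y. induction n; simpl; auto.
Qed.

Definition cmul := CComp (CPrimRec CZero (CComp cadd [CProj 1; CProj 2])) [CProj 0; CProj 1].
Lemma c_mul : computes cmul (fun v => nth 0 v 0 * nth 1 v 0).
Proof.
  eapply computes_ext. apply c_prec2. apply c_zero. apply c_comp2. apply c_add. apply c_proj. apply c_proj.
  intro v. simpl. generalize (nth 0 v 0) (nth 1 v 0). intros n y. induction n; simpl; auto.
  rewrite IHn. lia.
Qed.

Definition cpred := CComp (CPrimRec CZero (CProj 0)) [CProj 0].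
Lemma c_pred : computes cpred (fun v => pred (nth 0 v 0)).
Proof.
  eapply computes_ext. apply c_prec1. apply c_zero. apply c_proj.
  intro v. simpl. destruct (nth 0 v 0); reflexivity.
Qed.

Definition csub := CComp (CPrimRec (CProj 0) (CComp cpred [CProj 1])) [CProj 1; CProj 0].
Lemma c_sub : computes csub (fun v => nth 0 v 0 - nth 1 v 0).
Proof.
  eapply computes_ext with (F := fun v => primrec (fun w => nth 0 w 0) (fun w => pred (nth 1 w 0)) (nth 1 v 0) [nth 0 v 0]).
  - intro w. econstructor. constructor. apply c_proj. constructor. apply c_proj. constructor.
    apply c_prec. apply c_proj. eapply computes_ext. apply c_comp1. apply c_pred. apply c_proj.
    intro u; reflexivity.
  - intro w. simpl. generalize (nth 0 w 0) (nth 1 w 0). intros a n. induction n; simpl; [lia|].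
    rewrite IHn. lia.
Qed.

Definition cpow2 := CComp (CPrimRec (CComp csucc [CZero]) (CComp cadd [CProj 1; CProj 1])) [CProj 0].
Lemma c_pow2 : computes cpow2 (fun v => 2 ^ nth 0 v 0).
Proof.
  eapply computes_ext. apply c_prec1. apply c_comp1. apply c_succ. apply c_zero.
  apply c_comp2. apply c_add. apply c_proj. apply c_proj.
  intro v. simpl. generalize (nth 0 v 0). intros n. induction n; simpl; auto. rewrite IHn. lia.
Qed.

Fixpoint cconst (k : nat) : code := match k with 0 => CZero | S k' => CComp csucc [cconst k'] end.
Lemma c_const k : computes (cconst k) (fun _ => k).
Proof.
  induction k; simpl. apply c_zero.
  eapply computes_ext. apply c_comp1. apply c_succ. apply IHk. intro; reflexivity.
Qed.

Lemma c_add2 g G g' G' : computes g G -> computes g' G' -> computes (CComp cadd [g; g']) (fun v => G v + G' v).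
Proof. intros. eapply computes_ext. apply c_comp2; eauto. apply c_add. intro; reflexivity. Qed.
Lemma c_mul2 g G g' G' : computes g G -> computes g' G' -> computes (CComp cmul [g; g']) (fun v => G v * G' v).
Proof. intros. eapply computes_ext. apply c_comp2; eauto. apply c_mul. intro; reflexivity. Qed.
Lemma c_sub2 g G g' G' : computes g G -> computes g' G' -> computes (CComp csub [g; g']) (fun v => G v - G' v).
Proof. intros. eapply computes_ext. apply c_comp2; eauto. apply c_sub. intro; reflexivity. Qed.
Lemma c_succ1 g G : computes g G -> computes (CComp csucc [g]) (fun v => S (G v)).
Proof. intros. eapply computes_ext. apply c_comp1; eauto. apply c_succ. intro; reflexivity. Qed.
Lemma c_pow21 g G : computes g G -> computes (CComp cpow2 [g]) (fun v => 2 ^ G v).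
Proof. intros. eapply computes_ext. apply c_comp1; eauto. apply c_pow2. intro; reflexivity. Qed.
Lemma c_app1 cA A g G : (forall n, eval cA [n] (A n)) -> computes g G -> computes (CComp cA [g]) (fun v => A (G v)).
Proof. intros HA Hg v. econstructor. constructor. apply Hg. constructor. apply HA. Qed.

Lemma computes_fun c F : computes c F -> computable_fun (fun n => F [n]).
Proof. intros H. exists c. intro n. apply H. Qed.
Open Scope nat_scope.

Definition excomp F := exists c, computes c F.
Lemma ex_proj i : excomp (fun v => nth i v 0).
Proof. exists (CProj i). apply c_proj. Qed.
Lemma ex_const k : excomp (fun _ => k).
Proof. exists (cconst k). apply c_const. Qed.
Lemma ex_add G G' : excomp G -> excomp G' -> excomp (fun v => G v + G' v).
Proof. intros [g H] [g' H']. eexists. apply c_add2; eauto. Qed.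
Lemma ex_mul G G' : excomp G -> excomp G' -> excomp (fun v => G v * G' v).
Proof. intros [g H] [g' H']. eexists. apply c_mul2; eauto. Qed.
Lemma ex_sub G G' : excomp G -> excomp G' -> excomp (fun v => G v - G' v).
Proof. intros [g H] [g' H']. eexists. apply c_sub2; eauto. Qed.
Lemma ex_succ G : excomp G -> excomp (fun v => S (G v)).
Proof. intros [g H]. eexists. apply c_succ1; eauto. Qed.
Lemma ex_pow2 G : excomp G -> excomp (fun v => 2 ^ G v).
Proof. intros [g H]. eexists. apply c_pow21; eauto. Qed.
Lemma ex_app A G : computable_fun A -> excomp G -> excomp (fun v => A (G v)).
Proof. intros [cA HA] [g H]. eexists. apply c_app1; eauto. Qed.
Lemma ex_app2 (P : nat -> nat -> nat) G G' : excomp (fun v => P (nth 0 v 0) (nth 1 v 0)) ->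
  excomp G -> excomp G' -> excomp (fun v => P (G v) (G' v)).
Proof. intros [c Hc] [g H] [g' H']. eexists. eapply computes_ext. apply c_comp2; [exact Hc | exact H | exact H']. intro; reflexivity. Qed.
Lemma ex_mu F : excomp F -> (forall v, exists m, F (m :: v) = 0) ->
  excomp (fun v => least0 (fun m => F (m :: v))).
Proof. intros [c H] E. eexists. apply c_mu; [exact H | exact E]. Qed.
Lemma ex_prec1 F G : excomp F -> excomp G -> excomp (fun v => primrec F G (nth 0 v 0) []).
Proof. intros [f Hf] [g Hg]. eexists. apply c_prec1; eauto. Qed.
Lemma ex_ext F G : excomp F -> (forall v, F v = G v) -> excomp G.
Proof. intros [c H] E. exists c. eapply computes_ext; eauto. Qed.
Lemma ex_fun F : excomp (fun v => F (nth 0 v 0)) -> computable_fun F.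
Proof. intros [c H]. exists c. intro n. apply (H [n]). Qed.

Ltac build := repeat first [ apply ex_proj | apply ex_const | apply ex_add | apply ex_mul | apply ex_sub
  | apply ex_succ | apply ex_pow2 | (apply ex_app; [assumption|]) ].

Definition Tf (Pa Pb Pc Qa Qb Qc : nat -> nat) (k m : nat) : nat :=
  S (((Pa m * S (Qc m) + Qb m * S (Pc m)) - (Qa m * S (Pc m) + Pb m * S (Qc m))
     + ((Qa m * S (Pc m) + Pb m * S (Qc m)) - (Pa m * S (Qc m) + Qb m * S (Pc m)))) * 2 ^ k)
  - S (Pc m) * S (Qc m).

Definition phi Pa Pb Pc Qa Qb Qc (k lo : nat) : nat :=
  lo + least0 (fun j => Tf Pa Pb Pc Qa Qb Qc k (lo + j)).

Fixpoint hf Pa Pb Pc Qa Qb Qc (n : nat) : nat :=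
  match n with 0 => phi Pa Pb Pc Qa Qb Qc 0 0
  | S n' => phi Pa Pb Pc Qa Qb Qc (S n') (S (hf Pa Pb Pc Qa Qb Qc n')) end.

Lemma phi_spec Pa Pb Pc Qa Qb Qc k lo :
  (exists j, Tf Pa Pb Pc Qa Qb Qc k (lo + j) = 0) ->
  lo <= phi Pa Pb Pc Qa Qb Qc k lo /\ Tf Pa Pb Pc Qa Qb Qc k (phi Pa Pb Pc Qa Qb Qc k lo) = 0.
Proof.
  intros E. destruct (least0_spec _ E) as [H _]. unfold phi. split; [lia|exact H].
Qed.

Lemma hf_comp Pa Pb Pc Qa Qb Qc :
  computable_fun Pa -> computable_fun Pb -> computable_fun Pc ->
  computable_fun Qa -> computable_fun Qb -> computable_fun Qc ->
  (forall k lo, exists j, Tf Pa Pb Pc Qa Qb Qc k (lo + j) = 0) ->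
  computable_fun (hf Pa Pb Pc Qa Qb Qc).
Proof.
  intros HPa HPb HPc HQa HQb HQc Ex.
  assert (HT : excomp (fun v => Tf Pa Pb Pc Qa Qb Qc (nth 1 v 0) (nth 2 v 0 + nth 0 v 0))).
  { unfold Tf. build. }
  assert (Hphi : excomp (fun v => phi Pa Pb Pc Qa Qb Qc (nth 0 v 0) (nth 1 v 0))).
  { eapply ex_ext. apply ex_add. apply (ex_proj 1). apply ex_mu. apply HT.
    intro v. simpl. destruct (Ex (nth 0 v 0) (nth 1 v 0)) as [j Hj]. exists j. exact Hj.
    intro v. reflexivity. }
  apply ex_fun.
  eapply ex_ext. apply ex_prec1 with (F := fun _ => phi Pa Pb Pc Qa Qb Qc 0 0)
     (G := fun w => phi Pa Pb Pc Qa Qb Qc (S (nth 0 w 0)) (S (nth 1 w 0))).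
  apply ex_const. apply ex_app2. exact Hphi. build. build.
  intro v. cbv beta. generalize (nth 0 v 0). intro n. induction n as [|n IHn]; [reflexivity|]. cbn [primrec nth hf]. rewrite IHn; reflexivity.
Qed.

Fixpoint Gf (f : nat -> nat) (c k : nat) : nat :=
  match k with 0 => f c + c | S k' => Gf f c k' + f (S k' + c) + 1 end.

Lemma Gf_comp f c : computable_fun f -> computable_fun (Gf f c).
Proof.
  intros Hf. apply ex_fun.
  eapply ex_ext. apply ex_prec1 with (F := fun _ => f c + c)
     (G := fun w => nth 1 w 0 + f (S (nth 0 w 0) + c) + 1).
  apply ex_const. build.
  intro v. cbv beta. generalize (nth 0 v 0). intro n. induction n as [|n IHn]; [reflexivity|]. cbn [primrec nth Gf]. rewrite IHn; reflexivity.
Qed.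

Lemma comp3 A B C : computable_fun A -> computable_fun B -> computable_fun C ->
  computable_fun (fun n => A (B (C (S n)))).
Proof. intros. apply ex_fun. build. Qed.
Open Scope R_scope.

Definition rq (A B C : nat -> nat) (n : nat) : R := (INR (A n) - INR (B n)) / INR (S (C n)).

Lemma absnat_INR (X Y : nat) : INR ((X - Y) + (Y - X))%nat = Rabs (INR X - INR Y).
Proof.
  destruct (Nat.le_ge_cases X Y) as [H|H].
  - replace (X - Y)%nat with 0%nat by lia. rewrite Nat.add_0_l, minus_INR by lia.
    rewrite Rabs_left1. ring. apply le_INR in H. lra.
  - replace (Y - X)%nat with 0%nat by lia. rewrite Nat.add_0_r, minus_INR by lia.
    rewrite Rabs_right. ring. apply le_INR in H. lra.
Qed.

Lemma T_spec Pa Pb Pc Qa Qb Qc k m :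
  (Tf Pa Pb Pc Qa Qb Qc k m = 0)%nat <-> Rabs (rq Pa Pb Pc m - rq Qa Qb Qc m) < / 2 ^ k.
Proof.
  unfold Tf, rq.
  set (X := (Pa m * S (Qc m) + Qb m * S (Pc m))%nat).
  set (Y := (Qa m * S (Pc m) + Pb m * S (Qc m))%nat).
  set (D := (S (Pc m) * S (Qc m))%nat).
  assert (E : (INR (Pa m) - INR (Pb m)) / INR (S (Pc m)) - (INR (Qa m) - INR (Qb m)) / INR (S (Qc m))
     = (INR X - INR Y) / INR D).
  { unfold X, Y, D. rewrite !plus_INR, !mult_INR. field. split; apply not_0_INR; lia. }
  rewrite E. clear E.
  assert (HD : 0 < INR D) by (apply lt_0_INR; unfold D; lia).
  assert (H2 : 0 < 2 ^ k) by (apply pow_lt; lra).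
  unfold Rdiv at 1. rewrite Rabs_mult, Rabs_inv, (Rabs_right (INR D)) by lra.
  rewrite <- absnat_INR.
  set (A := ((X - Y) + (Y - X))%nat).
  assert (Eq : (INR A * / INR D < / 2 ^ k) <-> INR (A * 2 ^ k) < INR D).
  { rewrite mult_INR, pow_INR. simpl (INR 2).
    split; intro H.
    - apply (Rmult_lt_compat_r (INR D * 2 ^ k)) in H; [|nra].
      replace (INR A * / INR D * (INR D * 2 ^ k)) with (INR A * 2 ^ k) in H by (field; lra).
      replace (/ 2 ^ k * (INR D * 2 ^ k)) with (INR D) in H by (field; lra). exact H.
    - apply (Rmult_lt_reg_r (INR D * 2 ^ k)); [nra|].
      replace (INR A * / INR D * (INR D * 2 ^ k)) with (INR A * 2 ^ k) by (field; lra).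
      replace (/ 2 ^ k * (INR D * 2 ^ k)) with (INR D) by (field; lra). exact H. }
  rewrite Eq. split; intro H.
  - apply lt_INR. lia.
  - apply INR_lt in H. lia.
Qed.
Open Scope R_scope.

Lemma inc_strict (s : nat -> nat) : (forall n, s n < s (S n))%nat -> forall m n, (m < n)%nat -> (s m < s n)%nat.
Proof. intros H m n Hmn. induction Hmn. apply H. specialize (H m0). lia. Qed.
Lemma inc_le (s : nat -> nat) : (forall n, s n < s (S n))%nat -> forall m n, (m <= n)%nat -> (s m <= s n)%nat.
Proof. intros H m n Hmn. destruct (Nat.eq_dec m n). subst; lia. pose proof (inc_strict s H m n). lia. Qed.
Lemma inc_ge (s : nat -> nat) : (forall n, s n < s (S n))%nat -> forall n, (n <= s n)%nat.
Proof. intros H n. induction n. lia. specialize (H n). lia. Qed.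

Lemma index_lemma (s : nat -> nat) : (forall n, s n < s (S n))%nat -> forall N j, (s N <= j)%nat ->
  exists n, (N <= n)%nat /\ (s n <= j)%nat /\ (j < s (S n))%nat.
Proof.
  intros H N j Hj.
  assert (A : forall k, (j < s (N + k))%nat -> exists n, (N <= n)%nat /\ (s n <= j)%nat /\ (j < s (S n))%nat).
  { induction k; intro Hk. rewrite Nat.add_0_r in Hk. lia.
    destruct (Nat.lt_ge_cases j (s (N + k)%nat)) as [L|L]. auto.
    exists (N + k)%nat. rewrite Nat.add_succ_r in Hk. split; [lia|split; auto]. }
  apply (A (S j)). pose proof (inc_ge s H (N + S j)%nat). lia.
Qed.

Lemma qmono q : increasing_seq q -> forall m n, (m <= n)%nat -> q m <= q n.
Proof. intros H m n Hmn. induction Hmn. lra. specialize (H m0). lra. Qed.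

Lemma q_lt_x q x : increasing_seq q -> Un_cv q x -> forall n, q n < x.
Proof.
  intros H Hc n. assert (G : Un_growing q) by (intro k; left; apply H).
  pose proof (growing_ineq q x G Hc (S n)). specialize (H n). lra.
Qed.

Lemma inv_pow_le a b : (b <= a)%nat -> / 2 ^ a <= / 2 ^ b.
Proof. intros H. apply Rinv_le_contravar. apply pow_lt; lra. apply Rle_pow; [lra|lia]. Qed.

Lemma INR_le_pow2 n : INR n <= 2 ^ n.
Proof. induction n. simpl; lra. rewrite S_INR. simpl. pose proof (Rle_pow 2 0 n ltac:(lra) ltac:(lia)). simpl in H. lra. Qed.

Theorem theorem5p8 (x : R) :
  speedable x -> nearly_computable x -> regainingly_approximable x.
Proof.
  intros [_ [rho [Hrho [q [[Qa [Qb [Qc [HQa [HQb [HQc Hq]]]]]] [Hqinc [Hqcv Hgood]]]]]]]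
         [p [[Pa [Pb [Pc [HPa [HPb [HPc Hp]]]]]] [Hpcv Hnear]]].
  assert (Hqr : forall n, q n = rq Qa Qb Qc n) by (intro; rewrite Hq; reflexivity).
  assert (Hpr : forall n, p n = rq Pa Pb Pc n) by (intro; rewrite Hp; reflexivity).
  assert (Ex : forall k lo, exists j, Tf Pa Pb Pc Qa Qb Qc k (lo + j) = 0%nat).
  { intros k lo.
    assert (He : / 2 ^ k / 2 > 0) by (pose proof (pow_lt 2 k); apply Rdiv_lt_0_compat; [apply Rinv_0_lt_compat|]; lra).
    destruct (Hpcv _ He) as [N1 HN1]. destruct (Hqcv _ He) as [N2 HN2].
    exists (N1 + N2)%nat. apply T_spec. rewrite <- Hpr, <- Hqr.
    specialize (HN1 (lo + (N1 + N2))%nat ltac:(lia)). specialize (HN2 (lo + (N1 + N2))%nat ltac:(lia)).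
    unfold Rdist in *.
    pose proof (Rabs_triang (p (lo + (N1 + N2))%nat - x) (x - q (lo + (N1 + N2))%nat)).
    rewrite (Rabs_minus_sym x) in H.
    replace (p (lo + (N1 + N2))%nat - x + (x - q (lo + (N1 + N2))%nat)) with
      (p (lo + (N1 + N2))%nat - q (lo + (N1 + N2))%nat) in H by ring. lra. }
  set (h := hf Pa Pb Pc Qa Qb Qc).
  assert (Hhc : computable_fun h) by (apply hf_comp; auto).
  assert (Hhinc : forall n, (h n < h (S n))%nat).
  { intro n. unfold h; simpl. pose proof (phi_spec Pa Pb Pc Qa Qb Qc (S n) (S (hf Pa Pb Pc Qa Qb Qc n)) (Ex _ _)). lia. }
  assert (Hhcl : forall n, Rabs (p (h n) - q (h n)) < / 2 ^ n).
  { intro n. rewrite Hpr, Hqr. apply T_spec. unfold h. destruct n; simpl; apply phi_spec, Ex. }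
  destruct (Hnear h Hhc Hhinc) as [_ [f [Hfc Hfmod]]].
  assert (Hc : exists c, 3 / (1 - rho) < 2 ^ c).
  { destruct (INR_archimed 1 (3 / (1 - rho))) as [c Hc]. lra. exists c.
    pose proof (INR_le_pow2 c). lra. }
  destruct Hc as [c Hc].
  set (G := Gf f c).
  assert (HGc : computable_fun G) by (apply Gf_comp; auto).
  assert (HGinc : forall k, (G k < G (S k))%nat) by (intro; unfold G; simpl; lia).
  assert (HGf : forall k, (f (k + c) <= G k)%nat) by (intro k; destruct k; unfold G; simpl; lia).
  assert (HGk : forall k, (k + c <= G k)%nat) by (intro k; induction k; unfold G in *; simpl; lia).
  exists (fun k => q (h (G (S k)))).
  split; [|split; [|split]].
  - exists (fun n => Qa (h (G (S n)))), (fun n => Qb (h (G (S n)))), (fun n => Qc (h (G (S n)))).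
    split; [apply comp3; auto|]. split; [apply comp3; auto|]. split; [apply comp3; auto|].
    intro n. apply Hq.
  - intro k. apply qmono; auto. apply inc_le; auto. apply inc_le; auto.
  - intros eps Heps. destruct (Hqcv eps Heps) as [N HN]. exists N. intros k Hk. apply HN.
    pose proof (inc_ge h Hhinc (G (S k))). pose proof (HGk (S k)). lia.
  - intros N. destruct (Hgood (h (G N))) as [j [Hj Hrat]].
    destruct (index_lemma h Hhinc (G N) j Hj) as [n [Hn1 [Hn2 Hn3]]].
    destruct (index_lemma G HGinc N n Hn1) as [k [Hk1 [Hk2 Hk3]]].
    exists k. split; [exact Hk1|].
    assert (Hxj : 0 < x - q j) by (pose proof (q_lt_x q x Hqinc Hqcv j); lra).
    assert (Hr1 : x - q (S j) <= rho * (x - q j)).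
    { apply (Rmult_le_compat_r (x - q j)) in Hrat; [|lra].
      unfold Rdiv in Hrat. rewrite Rmult_assoc, Rinv_l, Rmult_1_r in Hrat by lra. lra. }
    assert (H1 : q (S j) <= q (h (S n))) by (apply qmono; auto; lia).
    assert (H2 : q (h n) <= q j) by (apply qmono; auto).
    assert (H3 : rho * (x - q j) <= rho * (x - q (h n))) by (apply Rmult_le_compat_l; lra).
    assert (Hsub : (1 - rho) * (x - q (h n)) <= q (h (S n)) - q (h n)) by lra.
    assert (Hm : Rabs (0 - (p (h (S n)) - p (h n))) < / 2 ^ (k + c)).
    { apply Hfmod. pose proof (HGf k). lia. }
    pose proof (Hhcl n) as E1. pose proof (Hhcl (S n)) as E2.
    assert (P1 : / 2 ^ n <= / 2 ^ (k + c)) by (apply inv_pow_le; pose proof (HGk k); lia).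
    assert (P2 : / 2 ^ S n <= / 2 ^ (k + c)) by (apply inv_pow_le; pose proof (HGk k); lia).
    apply Rabs_def2 in Hm. apply Rabs_def2 in E1. apply Rabs_def2 in E2.
    assert (Hd : (1 - rho) * (x - q (h n)) < 3 * / 2 ^ (k + c)) by lra.
    assert (H4 : q (h n) <= q (h (G (S k)))) by (apply qmono; auto; apply inc_le; auto; lia).
    rewrite pow_add, Rinv_mult in Hd.
    assert (Pk : 0 < / 2 ^ k) by (apply Rinv_0_lt_compat, pow_lt; lra).
    assert (Pc0 : 0 < 2 ^ c) by (apply pow_lt; lra).
    assert (Hc2 : 3 < (1 - rho) * 2 ^ c).
    { apply (Rmult_lt_compat_r (1 - rho)) in Hc; [|lra].
      unfold Rdiv in Hc. rewrite Rmult_assoc, Rinv_l, Rmult_1_r in Hc by lra. lra. }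
    assert (Hc3 : 3 * / 2 ^ c < 1 - rho).
    { apply (Rmult_lt_reg_r (2 ^ c)); [lra|]. rewrite Rmult_assoc, Rinv_l, Rmult_1_r by lra. lra. }
    assert (H5 : (1 - rho) * (x - q (h n)) < (1 - rho) * / 2 ^ k).
    { replace (3 * (/ 2 ^ k * / 2 ^ c)) with (/ 2 ^ k * (3 * / 2 ^ c)) in Hd by ring.
      pose proof (Rmult_lt_compat_l (/ 2 ^ k) _ _ Pk Hc3). lra. }
    apply Rmult_lt_reg_l in H5; [|lra]. lra.
Qed.
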